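(* Let $\bar{\boldsymbol{\Psi}}_{\mathrm{id}}=\mathrm{diag}(\bar\psi_{\mathrm{id},1},\dots,\bar\psi_{\mathrm{id},N})$ with all entries positive, $\bar\psi_{\mathrm{f},1}>0$, $\mathbf{w}_1\in\mathbb{R}^N\setminus\{\mathbf{0}\}$, $\theta\in[0,1]$, and $\alpha_1,\dots,\alpha_T>0$, $\beta_1,\dots,\beta_T>0$ with $\sum_t\alpha_t=\sum_t\beta_t=1$. For nonzero $\mathbf{x}_0\in\mathbb{R}^N$ let $$\Upsilon(\mathbf{x}_0)=\frac{\sum_{t=1}^T(\alpha_t(1-\theta)+\beta_t\theta)^2\,\mathbf{x}_0^\top\left(\alpha_t\bar{\boldsymbol{\Psi}}_{\mathrm{id}}+\beta_t\bar\psi_{\mathrm{f},1}\mathbf{w}_1\mathbf{w}_1^\top\right)^{-1}\mathbf{x}_0}{\mathbf{x}_0^\top\left(\bar{\boldsymbol{\Psi}}_{\mathrm{id}}+\bar\psi_{\mathrm{f},1}\mathbf{w}_1\mathbf{w}_1^\top\right)^{-1}\mathbf{x}_0},$$ $\gamma_t=\beta_t/\alpha_t$, $\eta_1=\bar\psi_{\mathrm{f},1}\mathbf{w}_1^\top\bar{\boldsymbol{\Psi}}_{\mathrm{id}}^{-1}\mathbf{w}_1$, and $\Delta=\sum_{t=1}^T\frac{\alpha_t(1-\theta(1-\gamma_t))^2(1-\gamma_t)}{1+\eta_1\gamma_t}$. Let $\mathbf{w}_1^\perp\neq\mathbf{0}$ be any vector with $\mathbf{w}_1^\top\bar{\boldsymbol{\Psi}}_{\mathrm{id}}^{-1}\mathbf{w}_1^\perp=0$.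 Then $$\Upsilon_{\mathrm{market}}:=\Upsilon(\mathbf{w}_1)=1+\theta^2\Big(\sum_{t}\frac{\beta_t^2}{\alpha_t}-1\Big)+\eta_1\Delta,\qquad \Upsilon_{\mathrm{orth}}:=\Upsilon(\mathbf{w}_1^\perp)=1+\theta^2\Big(\sum_t\frac{\beta_t^2}{\alpha_t}-1\Big),$$ and $\max_{\mathbf{x}_0\neq\mathbf{0}}\Upsilon(\mathbf{x}_0)$ equals $\Upsilon_{\mathrm{market}}$ if $\Delta\ge0$ and $\Upsilon_{\mathrm{orth}}$ if $\Delta\le0$, while $\min_{\mathbf{x}_0\neq\mathbf{0}}\Upsilon(\mathbf{x}_0)$ equals $\Upsilon_{\mathrm{orth}}$ if $\Delta\ge0$ and $\Upsilon_{\mathrm{market}}$ if $\Delta\le0$. Moreover: for fixed $(\eta_1,\alpha_1,\dots,\alpha_T,\beta_1,\dots,\beta_T)$, regarding $\Delta$ as a function of $\theta$, there exists $\theta^*\in[0,1]$ with $\Delta\ge0$ if $\theta\le\theta^*$ and $\Delta\le0$ if $\theta\ge\theta^*$; and for fixed $(\theta,\alpha_1,\dots,\alpha_T,\beta_1,\dots,\beta_T)$ with $\theta<1$, regarding $\Delta$ as a function of $\eta_1\ge0$, there exists $\eta_1^*\in[\frac{\theta}{1-\theta},\infty]$ with $\Delta\le0$ if $\eta_1\le\eta_1^*$ and $\Delta\ge0$ if $\eta_1\ge\eta_1^*$.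
   Context: $\Upsilon(\mathbf{x}_0)$ is the ratio of the expected cost of the separable schedule $\mathbf{v}_t^{\mathrm{sep}}=(\alpha_t(1-\theta)+\beta_t\theta)\mathbf{x}_0$ to the minimal expected cost of liquidating $\mathbf{x}_0$, under impact matrices $\mathbf{G}_t=\left(\alpha_t\bar{\boldsymbol{\Psi}}_{\mathrm{id}}+\beta_t\bar\psi_{\mathrm{f},1}\mathbf{w}_1\mathbf{w}_1^\top\right)^{-1}$ and cost $\sum_t\tfrac12\mathbf{v}_t^\top\mathbf{G}_t\mathbf{v}_t$. *)

(* Defs.v *)
From HB Require Import structures.
From mathcomp Require Import all_boot all_order all_algebra.
From mathcomp Require Import reals.
Set Implicit Arguments. Unset Strict Implicit. Unset Printing Implicit Defensive.
Import Order.TTheory GRing.Theory Num.Theory.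
Local Open Scope ring_scope.

Definition qinv (R : realType) (N : nat) (A : 'M[R]_N) (x : 'cV[R]_N) : R :=
  (x^T *m invmx A *m x) 0 0.

Definition impact (R : realType) (N : nat) (psi : 'rV[R]_N) (psif : R)
  (w : 'cV[R]_N) (a b : R) : 'M[R]_N :=
  a *: diag_mx psi + (b * psif) *: (w *m w^T).

(* Upsilon(x0): ratio of the separable-schedule cost to the minimal cost *)
Definition Upsilon (R : realType) (N T : nat) (psi : 'rV[R]_N) (psif : R)
  (w : 'cV[R]_N) (theta : R) (alpha beta : 'I_T -> R) (x : 'cV[R]_N) : R :=
  (\sum_(t < T) (alpha t * (1 - theta) + beta t * theta) ^+ 2 *
       qinv (impact psi psif w (alpha t) (beta t)) x)
  / qinv (impact psi psif w 1 1) x.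

Definition eta1 (R : realType) (N : nat) (psi : 'rV[R]_N) (psif : R)
  (w : 'cV[R]_N) : R :=
  psif * (w^T *m invmx (diag_mx psi) *m w) 0 0.

Definition gam (R : realType) (T : nat) (alpha beta : 'I_T -> R) (t : 'I_T) : R :=
  beta t / alpha t.

Definition Delta (R : realType) (T : nat) (alpha beta : 'I_T -> R) (eta theta : R) : R :=
  \sum_(t < T) alpha t * (1 - theta * (1 - gam alpha beta t)) ^+ 2
                 * (1 - gam alpha beta t) / (1 + eta * gam alpha beta t).

Definition Ups_orth (R : realType) (T : nat) (alpha beta : 'I_T -> R) (theta : R) : R :=
  1 + theta ^+ 2 * (\sum_(t < T) beta t ^+ 2 / alpha t - 1).

Definition Ups_market (R : realType) (T : nat) (alpha beta : 'I_T -> R)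
  (eta theta : R) : R :=
  Ups_orth alpha beta theta + eta * Delta alpha beta eta theta.

Definition is_max_nz (R : realType) (N : nat) (f : 'cV[R]_N -> R) (v : R) : Prop :=
  (forall x, x != 0 -> f x <= v) /\ exists2 x, x != 0 & f x = v.
Definition is_min_nz (R : realType) (N : nat) (f : 'cV[R]_N -> R) (v : R) : Prop :=
  (forall x, x != 0 -> v <= f x) /\ exists2 x, x != 0 & f x = v.

(* Main.v *)
Require Import Defs.
From HB Require Import structures.
From mathcomp Require Import all_boot all_order all_algebra.
From mathcomp Require Import boolp classical_sets reals.
From mathcomp Require Import ring lra.
Import Order.TTheory GRing.Theory Num.Theory.
Local Open Scope ring_scope.

Local Open Scope classical_set_scope.
Local Open Scope ring_scope.


Lemma cross (R : realType) (f : R -> R) (a b K : R) :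
  a <= b -> 0 <= K -> 0 <= f a -> f b <= 0 ->
  (forall x y, a <= x <= b -> a <= y <= b -> `|f x - f y| <= K * `|x - y|) ->
  (forall x y, a <= x -> x <= y -> y <= b -> f x < 0 -> f y <= 0) ->
  exists2 c, a <= c <= b & forall x, a <= x <= b ->
     (x <= c -> 0 <= f x) /\ (c <= x -> f x <= 0).
Proof.
move=> hab hK hfa hfb hL hS.
pose E := [set x : R | (a <= x <= b) /\ forall y, a <= y <= x -> 0 <= f y].
have Ea : E a.
  split; first by rewrite lexx hab.
  by move=> y /andP[h1 h2]; have -> : y = a by apply/eqP; rewrite eq_le h1 h2.
have ubE : ubound E b by move=> x [/andP[_ ->] _].
have hsE : has_sup E by split; [exists a | exists b].
set c := sup E.
have hac : a <= c by apply: sup_upper_bound.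
have hcb : c <= b by apply: ge_sup => //; exists a.
have H1 : forall y, a <= y -> y < c -> 0 <= f y.
  move=> y hy hyc.
  have hcy : 0 < c - y by rewrite subr_gt0.
  have [e [_ He] hye] := sup_adherent hcy hsE.
  rewrite opprB addrC subrK in hye.
  apply: He; rewrite hy /=; exact: ltW.
have hK1 : 0 < K + 1 by lra.
have Hc1 : 0 <= f c.
  case: (lerP 0 (f c)) => // hfc; exfalso.
  have [hca|hca] : a = c \/ a < c.
    by move: hac; rewrite le_eqVlt => /orP[/eqP->|->]; [left|right].
    by rewrite -hca in hfc; lra.
  have heps : 0 < - f c / (K + 1) by apply: divr_gt0; lra.
  have [e Ee hce] := sup_adherent heps hsE.
  have hec : e <= c by apply: sup_upper_bound.
  case: Ee => /andP[hae heb] He.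
  have hfe : 0 <= f e by apply: He; rewrite hae lexx.
  have := hL c e; rewrite hac hcb hae heb /= => /(_ isT isT).
  rewrite (ger0_norm (x := c - e)) ?subr_ge0 //.
  move=> hle.
  have : K * (c - e) <= K * (- f c / (K + 1)).
    apply: ler_wpM2l => //. move: hce. rewrite -/c. lra.
  have : K * (- f c / (K + 1)) < - f c.
    rewrite mulrA ltr_pdivrMr //; nra.
  move: hle; rewrite ler_norml => /andP[h1 h2]; lra.
have Hc2 : f c <= 0.
  case: (lerP (f c) 0) => // hfc; exfalso.
  have [hcb'|hcb'] : c = b \/ c < b.
    by move: hcb; rewrite le_eqVlt => /orP[/eqP->|->]; [left|right].
    by rewrite hcb' in hfc; lra.
  pose x := Num.min b (c + f c / (K + 1)).
  have hd : 0 < f c / (K + 1) by apply: divr_gt0.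
  have hcx : c < x by rewrite /x lt_min hcb' /=; lra.
  have hxb : x <= b by rewrite /x ge_min lexx.
  have hxd : x <= c + f c / (K + 1) by rewrite /x ge_min lexx orbT.
  have : E x.
    split; first by rewrite hxb andbT; apply: le_trans (ltW hcx).
    move=> y /andP[hay hyx].
    case: (ltrgtP y c) => hyc; first exact: H1.
    - have := hL c y; rewrite hac hcb hay /= => /(_ isT).
      have hyb : y <= b by apply: le_trans hxb.
      rewrite hyb => /(_ isT).
      rewrite (ltr0_norm (x := c - y)) ?subr_lt0 //.
      have : K * (- (c - y)) <= K * (f c / (K + 1)) by apply: ler_wpM2l => //; lra.
      have : K * (f c / (K + 1)) < f c by rewrite mulrA ltr_pdivrMr //; nra.
      move=> h1 h2; rewrite ler_norml => /andP[h3 h4]; lra.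
    - by rewrite hyc; apply: ltW.
  move=> /(sup_upper_bound hsE); rewrite -/c; lra.
exists c; first by rewrite hac hcb.
move=> x /andP[hax hxb]; split => hx.
- case: (ltrgtP x c) => hxc //; [exact: H1 | lra | by rewrite hxc].
- case: (ltrgtP x c) => hxc //; [lra | | by rewrite hxc].
  case: (lerP (f x) 0) => // hfx; exfalso.
  have : E x.
    split; first by rewrite hax hxb.
    move=> y /andP[hay hyx]; case: (lerP 0 (f y)) => // hfy.
    have := hS y x hay hyx hxb hfy; lra.
  move=> /(sup_upper_bound hsE); rewrite -/c; lra.
Qed.

Close Scope classical_set_scope.


Lemma inv_of_mul {R : realType} {n : nat} (A B : 'M[R]_n) : A *m B = 1%:M -> invmx A = B.
Proof.
move=> h; have [uA _] := mulmx1_unit h.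
by rewrite -[invmx A]mulmx1 -h mulmxA mulVmx // mul1mx.
Qed.

Definition dinv {R : realType} {N : nat} (psi : 'rV[R]_N) : 'rV[R]_N := \row_i (psi 0 i)^-1.

Lemma diag_dinv {R : realType} {N : nat} (psi : 'rV[R]_N) : (forall i, 0 < psi 0 i) ->
  diag_mx psi *m diag_mx (dinv psi) = 1%:M.
Proof.
move=> hp; apply/matrixP => i j.
rewrite mul_diag_mx !mxE; case: (i =P j) => [->|/eqP hij].
  by rewrite mulr1n mulfV // gt_eqF.
by rewrite mulr0n mulr0.
Qed.

Lemma invdiag {R : realType} {N : nat} (psi : 'rV[R]_N) : (forall i, 0 < psi 0 i) ->
  invmx (diag_mx psi) = diag_mx (dinv psi).
Proof. by move=> hp; apply: inv_of_mul; apply: diag_dinv. Qed.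

Definition bil {R : realType} {N : nat} (d : 'rV[R]_N) (x y : 'cV[R]_N) : R :=
  \sum_i x i 0 * d 0 i * y i 0.

Lemma bilE {R : realType} {N : nat} (d : 'rV[R]_N) (x y : 'cV[R]_N) :
  (x^T *m diag_mx d *m y) 0 0 = bil d x y.
Proof.
rewrite mul_mx_diag !mxE /bil; apply: eq_bigr => i _; by rewrite !mxE.
Qed.

Lemma bilC {R : realType} {N : nat} (d : 'rV[R]_N) (x y : 'cV[R]_N) : bil d x y = bil d y x.
Proof. by apply: eq_bigr => i _; ring. Qed.

Lemma mx11_mul {R : realType} (A B : 'M[R]_1) : (A *m B) 0 0 = A 0 0 * B 0 0.
Proof. by rewrite mxE big_ord1. Qed.

Lemma SM {R : realType} {N : nat} (psi : 'rV[R]_N) (w : 'cV[R]_N) (a c : R) :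
  (forall i, 0 < psi 0 i) -> 0 < a -> 0 <= c -> 0 <= bil (dinv psi) w w ->
  let D := diag_mx (dinv psi) in
  let k := c / (a + c * bil (dinv psi) w w) in
  (a *: diag_mx psi + c *: (w *m w^T)) *m
     (a^-1 *: (D - k *: (D *m w *m (w^T *m D)))) = 1%:M.
Proof.
move=> hp ha hc he D k.
have PD : diag_mx psi *m D = 1%:M by apply: diag_dinv.
have DD : D^T = D by rewrite /D tr_diag_mx.
set e := bil (dinv psi) w w.
have s11 : w^T *m D *m w = e%:M by rewrite [LHS]mx11_scalar /e -bilE.
set Z := w *m (w^T *m D).
have hce : 0 <= c * e by apply: mulr_ge0.
have hae : a + c * e != 0 by apply: lt0r_neq0; lra.
have H : (a *: diag_mx psi + c *: (w *m w^T)) *m (D - k *: (D *m w *m (w^T *m D)))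
   = a *: 1%:M + (c - a * k - c * k * e) *: Z.
  rewrite mulmxDl !mulmxBr -!scalemxAl -!scalemxAr !mulmxA PD mul1mx.
  have E1 : w *m w^T *m D *m w = e *: w.
    by rewrite -!mulmxA (mulmxA w^T) s11 mul_mx_scalar.
  have EZ : w *m w^T *m D = Z by rewrite /Z mulmxA.
  rewrite E1 -scalemxAl EZ !scalerA.
  rewrite !scalerBl -scalemxAl EZ scalerA.
  by rewrite -!addrA; congr (_ + _); rewrite addrCA.
rewrite -scalemxAr H /k scalerDr scalerA mulVf ?gt_eqF // scale1r.
have -> : c - a * (c / (a + c * e)) - c * (c / (a + c * e)) * e = 0.
  by field.
by rewrite scale0r scaler0 addr0.
Qed.

Lemma qinv_imp {R : realType} {N : nat} (psi : 'rV[R]_N) (psif : R) (w x : 'cV[R]_N) (a b : R) :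
  (forall i, 0 < psi 0 i) -> 0 < a -> 0 <= b -> 0 <= psif -> 0 <= bil (dinv psi) w w ->
  qinv (impact psi psif w a b) x =
  a^-1 * (bil (dinv psi) x x - (b * psif) / (a + b * psif * bil (dinv psi) w w)
          * (bil (dinv psi) w x) ^+ 2).
Proof.
move=> hp ha hb hf he.
move: (SM psi w a (b * psif) hp ha (mulr_ge0 hb hf) he) => /= /inv_of_mul.
rewrite /qinv /impact => ->.
set D := diag_mx (dinv psi).
have sub00 : forall A B : 'M[R]_1, (A - B) 0 0 = A 0 0 - B 0 0 by move=> *; rewrite !mxE.
have sc00 : forall r (A : 'M[R]_1), (r *: A) 0 0 = r * A 0 0 by move=> *; rewrite !mxE.
rewrite -scalemxAr -scalemxAl sc00; congr (_ * _).
rewrite mulmxBr mulmxBl sub00 bilE -scalemxAr -scalemxAl sc00; congr (_ - _ * _).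
rewrite -!mulmxA (mulmxA x^T) (mulmxA (x^T *m D)) (mulmxA w^T) mx11_mul /D !bilE.
by rewrite (bilC _ x w) expr2.
Qed.

Lemma bil_ge0 {R : realType} {N : nat} (psi : 'rV[R]_N) (x : 'cV[R]_N) :
  (forall i, 0 < psi 0 i) -> 0 <= bil (dinv psi) x x.
Proof.
move=> hp; apply: sumr_ge0 => i _; rewrite mxE mulrAC -expr2.
by apply: mulr_ge0; [apply: sqr_ge0 | rewrite invr_ge0 ltW].
Qed.

Lemma bil_gt0 {R : realType} {N : nat} (psi : 'rV[R]_N) (x : 'cV[R]_N) :
  (forall i, 0 < psi 0 i) -> x != 0 -> 0 < bil (dinv psi) x x.
Proof.
move=> hp hx; rewrite lt_def bil_ge0 // andbT; apply/eqP => h0.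
move/eqP: hx; apply; apply/matrixP => i j; rewrite (ord1 j) mxE.
have hF : forall k : 'I_N, true -> 0 <= x k 0 * dinv psi 0 k * x k 0.
  move=> k _; rewrite mxE mulrAC -expr2.
  by apply: mulr_ge0; [apply: sqr_ge0 | rewrite invr_ge0 ltW].
have := psumr_eq0P hF h0 isT.
have hpi : (psi 0 i)^-1 != 0 by rewrite invr_eq0 gt_eqF.
move=> /(_ i); rewrite mxE mulrAC -expr2 => /eqP; rewrite mulf_eq0 (negPf hpi) orbF.
by rewrite sqrf_eq0 => /eqP.
Qed.

Lemma bil_expand {R : realType} {N : nat} (d : 'rV[R]_N) (x w : 'cV[R]_N) (l : R) :
  \sum_i (x i 0 - l * w i 0) ^+ 2 * d 0 i =
  bil d x x - 2%:R * l * bil d w x + l ^+ 2 * bil d w w.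
Proof.
rewrite /bil mulr_sumr mulr_sumr -sumrB -big_split /=; apply: eq_bigr => i _; ring.
Qed.

Lemma CS {R : realType} {N : nat} (psi : 'rV[R]_N) (x w : 'cV[R]_N) :
  (forall i, 0 < psi 0 i) ->
  bil (dinv psi) w x ^+ 2 <= bil (dinv psi) w w * bil (dinv psi) x x.
Proof.
move=> hp.
have hge : forall l, 0 <= bil (dinv psi) x x - 2%:R * l * bil (dinv psi) w x
                          + l ^+ 2 * bil (dinv psi) w w.
  move=> l; rewrite -bil_expand; apply: sumr_ge0 => i _.
  by apply: mulr_ge0; [apply: sqr_ge0 | rewrite mxE invr_ge0 ltW].
have he := bil_ge0 psi w hp; have hq := bil_ge0 psi x hp.
set e := bil _ w w in hge he *; set q := bil _ x x in hge hq *;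
set s := bil _ w x in hge *.
case: (ltrgtP e 0) => he0; first lra.
  have := hge (s / e).
  have -> : q - 2%:R * (s / e) * s + (s / e) ^+ 2 * e = (e * q - s ^+ 2) / e.
    by field; rewrite gt_eqF.
  by rewrite pmulr_lge0 ?invr_gt0 // subr_ge0.
have h0 : s = 0.
  case: (eqVneq s 0) => // hs; exfalso.
  have := hge ((q + 1) / (2%:R * s)); rewrite he0.
  have -> : q - 2%:R * ((q + 1) / (2%:R * s)) * s + ((q + 1) / (2%:R * s)) ^+ 2 * 0 = -1.
    by field.
  lra.
by rewrite h0 he0 expr0n /= mul0r.
Qed.

Lemma eta1E {R : realType} {N : nat} (psi : 'rV[R]_N) (psif : R) (w : 'cV[R]_N) :
  (forall i, 0 < psi 0 i) -> eta1 psi psif w = psif * bil (dinv psi) w w.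
Proof. by move=> hp; rewrite /eta1 invdiag // bilE. Qed.

Lemma sum_c {R : realType} {T : nat} (alpha beta : 'I_T -> R) (theta : R) :
  (forall t, 0 < alpha t) ->
  \sum_(t < T) alpha t = 1 -> \sum_(t < T) beta t = 1 ->
  \sum_(t < T) alpha t * (1 - theta * (1 - gam alpha beta t)) ^+ 2 = Ups_orth alpha beta theta.
Proof.
move=> ha sa sb.
transitivity (\sum_(t < T) ((1 - theta) ^+ 2 * alpha t + 2%:R * theta * (1 - theta) * beta t
                            + theta ^+ 2 * (beta t ^+ 2 / alpha t))).
  apply: eq_bigr => t _; rewrite /gam; field; exact: lt0r_neq0.
rewrite !big_split /= -!mulr_sumr sa sb /Ups_orth; ring.
Qed.

Lemma Ups_formula {R : realType} {N T : nat} (psi : 'rV[R]_N) (psif : R)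
  (w : 'cV[R]_N) (theta : R) (alpha beta : 'I_T -> R) (x : 'cV[R]_N) :
  (forall i, 0 < psi 0 i) -> 0 < psif ->
  (forall t, 0 < alpha t) -> (forall t, 0 < beta t) ->
  \sum_(t < T) alpha t = 1 -> \sum_(t < T) beta t = 1 -> x != 0 ->
  Upsilon psi psif w theta alpha beta x =
  Ups_orth alpha beta theta + Delta alpha beta (psif * bil (dinv psi) w w) theta *
    (psif * bil (dinv psi) w x ^+ 2 /
      ((1 + psif * bil (dinv psi) w w) * bil (dinv psi) x x - psif * bil (dinv psi) w x ^+ 2)).
Proof.
move=> hp hf ha hb sa sb hx.
have he := bil_ge0 psi w hp; have hq := bil_gt0 psi x hp hx.
have hcs := CS psi x w hp.
rewrite /Upsilon.
under eq_bigr => t _ do rewrite qinv_imp ?(ltW (hb t)) ?(ltW hf) //.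
rewrite qinv_imp ?ler01 ?(ltW hf) //.
set e := bil _ w w in he hcs *; set q := bil _ x x in hq hcs *;
set s := bil _ w x in hcs *.
set eta := psif * e.
have heta : 0 <= eta by apply: mulr_ge0 => //; apply: ltW.
have hS : psif * s ^+ 2 <= eta * q by rewrite /eta -mulrA ler_wpM2l // ltW.
set S := psif * s ^+ 2 in hS *.
have hS0 : 0 <= S by apply: mulr_ge0; [apply: ltW | apply: sqr_ge0].
set c := fun t => alpha t * (1 - theta * (1 - gam alpha beta t)) ^+ 2.
set B := \sum_(t < T) c t * gam alpha beta t / (1 + eta * gam alpha beta t).
have hg : forall t, 0 < gam alpha beta t by move=> t; apply: divr_gt0.
have hnum : \sum_(t < T) (alpha t * (1 - theta) + beta t * theta) ^+ 2 *
     ((alpha t)^-1 * (q - beta t * psif / (alpha t + beta t * psif * e) * s ^+ 2))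
   = (\sum_(t < T) c t) * q - B * S.
  rewrite mulr_suml /B mulr_suml -sumrB; apply: eq_bigr => t _.
  rewrite /c /S /gam /eta.
  have := ha t; have := hb t => h1 h2.
  field.
  have : 0 <= psif * e * beta t by rewrite !mulr_ge0 // ltW.
  move=> h3; apply/andP; split; apply: lt0r_neq0; lra.
have hD : Delta alpha beta eta theta = \sum_(t < T) c t - (1 + eta) * B.
  rewrite /Delta /B mulr_sumr -sumrB; apply: eq_bigr => t _.
  rewrite /c; have := hg t => h1; field.
  have : 0 <= eta * gam alpha beta t by rewrite mulr_ge0 // ltW.
  move=> h3; apply: lt0r_neq0; lra.
rewrite hnum hD sum_c //.
have hd1 : 1 + eta != 0 by apply: lt0r_neq0; lra.
have hd2 : (1 + eta) * q - S != 0.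
  apply: lt0r_neq0; have : eta * q + q <= (1 + eta) * q by rewrite mulrDl mul1r addrC.
  lra.
have -> : 1^-1 * (q - 1 * psif / (1 + 1 * psif * e) * s ^+ 2) = ((1 + eta) * q - S) / (1 + eta).
  rewrite /S /eta; field; by rewrite -/eta.
by field; rewrite hd1 hd2.
Qed.


Lemma sum_ab0 {R : realType} {T : nat} (alpha beta : 'I_T -> R) (K : R) :
  \sum_(t < T) alpha t = 1 -> \sum_(t < T) beta t = 1 ->
  \sum_(t < T) (alpha t - beta t) * K = 0.
Proof. by move=> sa sb; rewrite -mulr_suml sumrB sa sb subrr mul0r. Qed.

Lemma Delta0_ge0 {R : realType} {T : nat} (alpha beta : 'I_T -> R) (eta : R) :
  (forall t, 0 < alpha t) -> (forall t, 0 < beta t) -> 0 <= eta ->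
  \sum_(t < T) alpha t = 1 -> \sum_(t < T) beta t = 1 ->
  0 <= Delta alpha beta eta 0.
Proof.
move=> ha hb he sa sb; rewrite /Delta.
have hg : forall t, 0 < gam alpha beta t by move=> t; apply: divr_gt0.
rewrite (eq_bigr (fun t => alpha t * eta * (1 - gam alpha beta t) ^+ 2 /
     ((1 + eta * gam alpha beta t) * (1 + eta)) + (alpha t - beta t) * (1 + eta)^-1)).
  rewrite big_split /= sum_ab0 // addr0; apply: sumr_ge0 => t _.
  have h3 : 0 <= eta * gam alpha beta t by rewrite mulr_ge0 // ltW.
  apply: divr_ge0; last by apply: mulr_ge0; lra.
  apply: mulr_ge0; last exact: sqr_ge0.
  by apply: mulr_ge0 => //; apply: ltW.
move=> t _; have := hg t; have := ha t => h1 h2.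
have h3 : 0 <= eta * gam alpha beta t by rewrite mulr_ge0 // ltW.
rewrite /gam in h2 h3 *; field.
have h4 : 0 <= eta * beta t by rewrite mulr_ge0 // ltW.
by rewrite !lt0r_neq0 //; lra.
Qed.

Lemma Delta1_le0 {R : realType} {T : nat} (alpha beta : 'I_T -> R) (eta : R) :
  (forall t, 0 < alpha t) -> (forall t, 0 < beta t) -> 0 <= eta ->
  \sum_(t < T) alpha t = 1 -> \sum_(t < T) beta t = 1 ->
  Delta alpha beta eta 1 <= 0.
Proof.
move=> ha hb he sa sb; rewrite /Delta.
have hg : forall t, 0 < gam alpha beta t by move=> t; apply: divr_gt0.
rewrite (eq_bigr (fun t => - (alpha t * (1 - gam alpha beta t) ^+ 2 *
     (gam alpha beta t + 1 + eta * gam alpha beta t) /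
     ((1 + eta * gam alpha beta t) * (1 + eta))) + (alpha t - beta t) * (1 + eta)^-1)).
  rewrite big_split /= sum_ab0 // addr0 sumrN oppr_le0; apply: sumr_ge0 => t _.
  have h3 : 0 <= eta * gam alpha beta t by rewrite mulr_ge0 // ltW.
  apply: divr_ge0; last by apply: mulr_ge0; lra.
  apply: mulr_ge0; last by have := hg t; lra.
  apply: mulr_ge0; last exact: sqr_ge0.
  exact: ltW.
move=> t _; have := hg t; have := ha t => h1 h2.
have h3 : 0 <= eta * gam alpha beta t by rewrite mulr_ge0 // ltW.
rewrite /gam in h2 h3 *; field.
have h4 : 0 <= eta * beta t by rewrite mulr_ge0 // ltW.
by rewrite !lt0r_neq0 //; lra.
Qed.

Lemma quad_sign {R : realType} (a0 a1 a2 x y : R) :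
  let p t := a0 - 2%:R * t * a1 + t ^+ 2 * a2 in
  0 <= p 0 -> p 1 <= 0 -> 0 <= x -> x <= y -> y <= 1 -> p x < 0 -> p y <= 0.
Proof.
move=> p h0 h1 hx hxy hy1 hpx.
case: (lerP a2 0) => ha2.
- case: (lerP (p y) 0) => // hpy; exfalso.
  have id1 : y * p x = (y - x) * p 0 + x * p y - a2 * x * (y - x) * y by rewrite /p; ring.
  have t1 : 0 <= (y - x) * p 0 by apply: mulr_ge0 => //; lra.
  have t2 : 0 <= - a2 * x * (y - x) * y.
    by apply: mulr_ge0; [apply: mulr_ge0; [apply: mulr_ge0|]|]; lra.
  have t3 : 0 <= x * p y by apply: mulr_ge0; lra.
  case: (ltrgtP x 0) => hx0; [lra| |].
  + have t4 : 0 < x * p y by apply: mulr_gt0.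
    have t5 : y * p x < 0 by rewrite pmulr_rlt0 //; lra.
    lra.
  + by move: hpx; rewrite hx0; lra.
- have id2 : (1 - x) * p y = (1 - y) * p x + (y - x) * p 1 - a2 * (y - x) * (1 - y) * (1 - x)
    by rewrite /p; ring.
  have t1 : (1 - y) * p x <= 0 by apply: mulr_ge0_le0; lra.
  have t2 : (y - x) * p 1 <= 0 by apply: mulr_ge0_le0; lra.
  have t3 : 0 <= a2 * (y - x) * (1 - y) * (1 - x).
    by apply: mulr_ge0; [apply: mulr_ge0; [apply: mulr_ge0|]|]; lra.
  case: (ltrgtP x 1) => hx1; [|lra|].
  + have : (1 - x) * p y <= 0 by lra.
    by rewrite pmulr_rle0 // subr_gt0.
  + have -> : y = 1 by lra.
    done.
Qed.

Lemma Delta_quad {R : realType} {T : nat} (alpha beta : 'I_T -> R) (eta th : R) :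
  let kk t := alpha t * (1 - gam alpha beta t) / (1 + eta * gam alpha beta t) in
  Delta alpha beta eta th =
  \sum_(t < T) kk t - 2%:R * th * \sum_(t < T) kk t * (1 - gam alpha beta t)
  + th ^+ 2 * \sum_(t < T) kk t * (1 - gam alpha beta t) ^+ 2.
Proof.
move=> kk; rewrite /Delta !mulr_sumr -sumrB -big_split /=.
by apply: eq_bigr => t _; rewrite /kk; ring.
Qed.

Lemma part4 {R : realType} {T : nat} (alpha beta : 'I_T -> R) (eta : R) :
  (forall t, 0 < alpha t) -> (forall t, 0 < beta t) -> 0 <= eta ->
  \sum_(t < T) alpha t = 1 -> \sum_(t < T) beta t = 1 ->
  exists2 ths : R, 0 <= ths <= 1 &
    forall th : R, 0 <= th <= 1 ->
      (th <= ths -> 0 <= Delta alpha beta eta th) /\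
      (ths <= th -> Delta alpha beta eta th <= 0).
Proof.
move=> ha hb he sa sb.
have hD0 := Delta0_ge0 alpha beta eta ha hb he sa sb.
have hD1 := Delta1_le0 alpha beta eta ha hb he sa sb.
move: hD0 hD1.
have hq := Delta_quad alpha beta eta; simpl in hq.
set a0 := \sum_(t < T) _ in hq; set a1 := \sum_(t < T) _ * _ in hq;
set a2 := \sum_(t < T) _ * _ ^+ 2 in hq.
rewrite !hq => hD0 hD1.
have := @cross R (fun th => Delta alpha beta eta th) 0 1 (2%:R * `|a1| + 2%:R * `|a2|).
rewrite /=; rewrite !hq; apply => //.
- by rewrite addr_ge0 // mulr_ge0.
- move=> x y /andP[hx0 hx1] /andP[hy0 hy1]; rewrite !hq.
  have -> : a0 - 2%:R * x * a1 + x ^+ 2 * a2 - (a0 - 2%:R * y * a1 + y ^+ 2 * a2)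
           = (x - y) * (a2 * (x + y) - 2%:R * a1) by ring.
  rewrite normrM mulrC ler_wpM2r //.
  apply: le_trans (ler_normB _ _) _.
  rewrite !normrM (ger0_norm (x := x + y)); last lra.
  rewrite (ger0_norm (x := 2%:R)) // addrC lerD2l mulrC ler_wpM2r //; lra.
- move=> x y hx hxy hy; rewrite !hq.
  exact: (quad_sign a0 a1 a2 x y hD0 hD1 hx hxy hy).
Qed.

Lemma G_diff {R : realType} {T : nat} (alpha beta : 'I_T -> R) (theta u v : R) :
  (forall t, 0 < alpha t) -> (forall t, 0 < beta t) -> 0 <= u -> 0 <= v ->
  (1 + u) * Delta alpha beta u theta - (1 + v) * Delta alpha beta v theta =
  (u - v) * \sum_(t < T) alpha t * (1 - theta * (1 - gam alpha beta t)) ^+ 2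
       * (1 - gam alpha beta t) ^+ 2
       / ((1 + u * gam alpha beta t) * (1 + v * gam alpha beta t)).
Proof.
move=> ha hb hu hv; rewrite /Delta !mulr_sumr -sumrB; apply: eq_bigr => t _.
have hg : 0 < gam alpha beta t by apply: divr_gt0.
have h1 : 0 <= u * gam alpha beta t by rewrite mulr_ge0 // ltW.
have h2 : 0 <= v * gam alpha beta t by rewrite mulr_ge0 // ltW.
field; rewrite !lt0r_neq0 //; lra.
Qed.

Lemma W_bounds {R : realType} {T : nat} (alpha beta : 'I_T -> R) (theta u v : R) :
  (forall t, 0 < alpha t) -> (forall t, 0 < beta t) -> 0 <= u -> 0 <= v ->
  let W := \sum_(t < T) alpha t * (1 - theta * (1 - gam alpha beta t)) ^+ 2
       * (1 - gam alpha beta t) ^+ 2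
       / ((1 + u * gam alpha beta t) * (1 + v * gam alpha beta t)) in
  0 <= W /\ W <= \sum_(t < T) alpha t * (1 - theta * (1 - gam alpha beta t)) ^+ 2
       * (1 - gam alpha beta t) ^+ 2.
Proof.
move=> ha hb hu hv W.
have hn : forall t, 0 <= alpha t * (1 - theta * (1 - gam alpha beta t)) ^+ 2
       * (1 - gam alpha beta t) ^+ 2.
  move=> t; apply: mulr_ge0; last exact: sqr_ge0.
  by apply: mulr_ge0; [apply: ltW | apply: sqr_ge0].
have hd : forall t, 1 <= (1 + u * gam alpha beta t) * (1 + v * gam alpha beta t).
  move=> t; have hg : 0 < gam alpha beta t by apply: divr_gt0.
  have h1 : 0 <= u * gam alpha beta t by rewrite mulr_ge0 // ltW.
  have h2 : 0 <= v * gam alpha beta t by rewrite mulr_ge0 // ltW.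
  have : 0 <= u * gam alpha beta t * (v * gam alpha beta t) by apply: mulr_ge0.
  rewrite mulrDl mul1r mulrDr mulr1; lra.
split.
  apply: sumr_ge0 => t _; apply: divr_ge0 => //; have := hd t; lra.
apply: ler_sum => t _.
have hd0 : 0 < (1 + u * gam alpha beta t) * (1 + v * gam alpha beta t).
  by have := hd t; lra.
rewrite ler_pdivrMr //; apply: ler_peMr => //.
Qed.

Lemma Delta_e0 {R : realType} {T : nat} (alpha beta : 'I_T -> R) (theta : R) :
  (forall t, 0 < alpha t) -> (forall t, 0 < beta t) ->
  \sum_(t < T) alpha t = 1 -> \sum_(t < T) beta t = 1 ->
  0 <= theta -> theta < 1 ->
  Delta alpha beta (theta / (1 - theta)) theta <= 0.
Proof.
move=> ha hb sa sb h0 h1; rewrite /Delta.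
rewrite (eq_bigr (fun t => (1 - theta) * ((1 - theta) * (alpha t - beta t)
             + theta * (beta t - beta t ^+ 2 / alpha t)))).
  rewrite -mulr_sumr big_split /= -!mulr_sumr sumrB sa sb subrr mulr0 add0r.
  rewrite sumrB sb.
  have : 1 <= \sum_(t < T) beta t ^+ 2 / alpha t.
    have -> : \sum_(t < T) beta t ^+ 2 / alpha t =
       1 + \sum_(t < T) (beta t - alpha t) ^+ 2 / alpha t.
      have -> : \sum_(t < T) (beta t - alpha t) ^+ 2 / alpha t =
         \sum_(t < T) ((beta t ^+ 2 / alpha t + alpha t) - 2%:R * beta t).
        apply: eq_bigr => t _; have := ha t => hat; field; exact: lt0r_neq0.
      by rewrite sumrB big_split /= -mulr_sumr sa sb; ring.
    rewrite lerDl; apply: sumr_ge0 => t _; apply: divr_ge0; [apply: sqr_ge0|apply: ltW].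
  exact: ha.
  move=> hs; rewrite pmulr_rle0; last lra.
  by apply: mulr_ge0_le0 => //; lra.
move=> t _; have hat := ha t; have hbt := hb t.
have h2 : 0 < 1 - theta + theta * gam alpha beta t.
  have hg : 0 < gam alpha beta t by apply: divr_gt0.
  have : 0 <= theta * gam alpha beta t by apply: mulr_ge0 => //; apply: ltW.
  lra.
rewrite /gam in h2 *; field.
have h3 : 0 < (1 - theta) * alpha t by apply: mulr_gt0 => //; lra.
have h4 : 0 <= theta * beta t by apply: mulr_ge0 => //; apply: ltW.
rewrite !lt0r_neq0 //; lra.
Qed.

Lemma part5 {R : realType} {T : nat} (alpha beta : 'I_T -> R) (theta : R) :
  (forall t, 0 < alpha t) -> (forall t, 0 < beta t) ->
  \sum_(t < T) alpha t = 1 -> \sum_(t < T) beta t = 1 ->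
  0 <= theta -> theta < 1 ->
  (exists2 es : R, theta / (1 - theta) <= es &
     forall e : R, 0 <= e ->
       (e <= es -> Delta alpha beta e theta <= 0) /\
       (es <= e -> 0 <= Delta alpha beta e theta))
  \/ (forall e : R, 0 <= e -> Delta alpha beta e theta <= 0).
Proof.
move=> ha hb sa sb h0 h1.
case: (pselect (forall e : R, 0 <= e -> Delta alpha beta e theta <= 0)) => Hall;
  [by right | left].
have [e1 [he1 hpos]] : exists e1, 0 <= e1 /\ 0 < Delta alpha beta e1 theta.
  apply: contrapT => hne; apply: Hall => e he; rewrite leNgt; apply/negP => hlt.
  by apply: hne; exists e.
pose G e := (1 + e) * Delta alpha beta e theta.
set K := \sum_(t < T) alpha t * (1 - theta * (1 - gam alpha beta t)) ^+ 2
       * (1 - gam alpha beta t) ^+ 2.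
have Gmono : forall u v, 0 <= v -> v <= u -> G v <= G u.
  move=> u v hv hvu; have hu : 0 <= u by apply: le_trans hvu.
  rewrite -subr_ge0 /G G_diff //; apply: mulr_ge0; first lra.
  by case: (W_bounds alpha beta theta u v ha hb hu hv).
have GL : forall u v, 0 <= u -> 0 <= v -> `|G u - G v| <= K * `|u - v|.
  move=> u v hu hv; rewrite /G G_diff // normrM mulrC ler_wpM2r //.
  case: (W_bounds alpha beta theta u v ha hb hu hv) => hW0 hW1.
  by rewrite ger0_norm.
have GD : forall e, 0 <= e -> ((0 <= G e) = (0 <= Delta alpha beta e theta)) /\
                               ((G e <= 0) = (Delta alpha beta e theta <= 0)).
  move=> e he; rewrite /G; split; [rewrite pmulr_rge0 // | rewrite pmulr_rle0 //]; lra.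
set e0 := theta / (1 - theta).
have he0 : 0 <= e0 by apply: divr_ge0 => //; lra.
have Ge0 : G e0 <= 0.
  by rewrite (GD e0 he0).2; apply: Delta_e0.
have Ge1 : 0 < G e1 by rewrite /G mulr_gt0 //; lra.
have he01 : e0 <= e1.
  case: (lerP e0 e1) => // h; have := Gmono e0 e1 he1 (ltW h); lra.
have hK : 0 <= K.
  by case: (W_bounds alpha beta theta e0 e0 ha hb he0 he0) => hW0 hW1; apply: le_trans hW1.
have := @cross R (fun e => - G e) e0 e1 K he01 hK.
rewrite /= oppr_ge0 oppr_le0 => /(_ Ge0 (ltW Ge1)).
case.
- move=> x y /andP[hx _] /andP[hy _]; rewrite -opprD normrN.
  by apply: GL; [exact: le_trans he0 hx | exact: le_trans he0 hy].
- move=> x y hx hxy hy; rewrite oppr_lt0 oppr_le0 => hGx.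
  have := Gmono y x (le_trans he0 hx) hxy; lra.
move=> c /andP[hc0 hc1] Hc.
exists c => // e he; split => hec.
- rewrite -(GD e he).2.
  case: (lerP e0 e) => h.
    by have := (Hc e); rewrite h (le_trans hec hc1) oppr_ge0 => /(_ isT) [/(_ hec)].
  by have := Gmono e0 e he (ltW h); lra.
- rewrite -(GD e he).1.
  case: (lerP e e1) => h.
    by have := (Hc e); rewrite h (le_trans hc0 hec) oppr_le0 => /(_ isT) [_ /(_ hec)].
  by have := Gmono e e1 he1 (ltW h); lra.
Qed.


Lemma orth_exists {R : realType} {N : nat} (psi : 'rV[R]_N) (w : 'cV[R]_N) :
  (2 <= N)%N -> (forall i, 0 < psi 0 i) -> w != 0 ->
  exists2 wp : 'cV[R]_N, wp != 0 & bil (dinv psi) w wp = 0.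
Proof.
move=> hN hp hw.
have [i hi] : exists i, w i 0 != 0.
  case: (pickP (fun i => w i 0 != 0)) => [i hi|h]; first by exists i.
  exfalso; move/eqP: hw; apply; apply/matrixP => k l; rewrite (ord1 l) mxE.
  by move/negbFE/eqP: (h k).
have h1 : (1 < N)%N by [].
have h0 : (0 < N)%N by apply: ltn_trans h1.
have [j hij] : exists j : 'I_N, j != i.
  case: (eqVneq i (Ordinal h0)) => hi0; [exists (Ordinal h1) | exists (Ordinal h0)];
    last by rewrite eq_sym.
  by rewrite hi0.
pose u k := w k 0 * dinv psi 0 k.
have hui : u i != 0.
  by rewrite /u mulf_eq0 negb_or hi mxE invr_eq0 gt_eqF.
exists (\col_k (if k == i then u j else if k == j then - u i else 0)).
  apply/eqP => /matrixP /(_ j 0); rewrite !mxE (negPf hij) eqxx => /eqP.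
  by rewrite oppr_eq0 (negPf hui).
rewrite /bil (bigD1 i) //= (bigD1 j) //= big1.
  by rewrite !mxE eqxx (negPf hij) eqxx /u !mxE; ring.
move=> k /andP[hki hkj]; by rewrite !mxE (negPf hki) (negPf hkj) mulr0.
Qed.

Lemma g_bounds {R : realType} (psif e q s : R) :
  0 < psif -> 0 <= e -> 0 < q -> s ^+ 2 <= e * q ->
  0 <= psif * s ^+ 2 / ((1 + psif * e) * q - psif * s ^+ 2) <= psif * e.
Proof.
move=> hf he hq hcs.
have hfe : 0 <= psif * e by apply: mulr_ge0 => //; apply: ltW.
have hS0 : 0 <= psif * s ^+ 2 by apply: mulr_ge0; [apply: ltW | apply: sqr_ge0].
have hS : psif * s ^+ 2 <= psif * e * q by rewrite -mulrA ler_wpM2l // ltW.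
have hd : 0 < (1 + psif * e) * q - psif * s ^+ 2.
  have : (1 + psif * e) * q = q + psif * e * q by rewrite mulrDl mul1r.
  lra.
apply/andP; split; first exact: divr_ge0 (ltW hd).
rewrite ler_pdivrMr //.
have : psif * e * ((1 + psif * e) * q - psif * s ^+ 2) - psif * s ^+ 2
       = (1 + psif * e) * (psif * e * q - psif * s ^+ 2) by ring.
have : 0 <= (1 + psif * e) * (psif * e * q - psif * s ^+ 2).
  apply: mulr_ge0; lra.
lra.
Qed.

Theorem mainTheorem8 (R : realType) (N T : nat) (psi : 'rV[R]_N) (psif : R)
  (w : 'cV[R]_N) (theta : R) (alpha beta : 'I_T -> R) :
  (2 <= N)%N ->
  (forall i, 0 < psi 0 i) -> 0 < psif -> w != 0 ->
  0 <= theta <= 1 ->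
  (forall t, 0 < alpha t) -> (forall t, 0 < beta t) ->
  \sum_(t < T) alpha t = 1 -> \sum_(t < T) beta t = 1 ->
  let Ups := Upsilon psi psif w theta alpha beta in
  let eta := eta1 psi psif w in
  let D := Delta alpha beta eta theta in
  let Umkt := Ups_market alpha beta eta theta in
  let Uorth := Ups_orth alpha beta theta in
  [/\ Ups w = Umkt,
      (forall wp : 'cV[R]_N, wp != 0 ->
         (w^T *m invmx (diag_mx psi) *m wp) 0 0 = 0 -> Ups wp = Uorth),
      (0 <= D -> is_max_nz Ups Umkt /\ is_min_nz Ups Uorth) /\
      (D <= 0 -> is_max_nz Ups Uorth /\ is_min_nz Ups Umkt),
      (exists2 ths : R, 0 <= ths <= 1 &
         forall th : R, 0 <= th <= 1 ->
           (th <= ths -> 0 <= Delta alpha beta eta th) /\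
           (ths <= th -> Delta alpha beta eta th <= 0))
    & (theta < 1 ->
         (exists2 es : R, theta / (1 - theta) <= es &
            forall e : R, 0 <= e ->
              (e <= es -> Delta alpha beta e theta <= 0) /\
              (es <= e -> 0 <= Delta alpha beta e theta))
         \/
         (forall e : R, 0 <= e -> Delta alpha beta e theta <= 0))].
Proof.
move=> hN hp hf hw /andP[ht0 ht1] ha hb sa sb.
cbv zeta.
rewrite (eta1E psi psif w hp).
have he := bil_gt0 psi w hp hw.
set e := bil (dinv psi) w w in he *.
have heta : 0 <= psif * e by apply: mulr_ge0; apply: ltW.
set Dl := Delta alpha beta (psif * e) theta.
have hF := fun x hx => Ups_formula psi psif w theta alpha beta x hp hf ha hb sa sb hx.
have hG : forall x : 'cV[R]_N, x != 0 ->
   exists2 g, 0 <= g <= psif * e &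
     Upsilon psi psif w theta alpha beta x = Ups_orth alpha beta theta + Dl * g.
  move=> x hx; rewrite hF // -/e.
  eexists; last reflexivity.
  apply: g_bounds; [done | exact: ltW | exact: bil_gt0 | exact: CS].
have hmkt : Upsilon psi psif w theta alpha beta w = Ups_market alpha beta (psif * e) theta.
  rewrite hF // -/e /Ups_market -/Dl.
  have -> : psif * e ^+ 2 / ((1 + psif * e) * e - psif * e ^+ 2) = psif * e.
    have -> : (1 + psif * e) * e - psif * e ^+ 2 = e by ring.
    by field; rewrite gt_eqF.
  by rewrite mulrC.
have horth : forall wp : 'cV[R]_N, wp != 0 -> bil (dinv psi) w wp = 0 ->
    Upsilon psi psif w theta alpha beta wp = Ups_orth alpha beta theta.
  move=> wp hwp h0; rewrite hF // h0 expr0n /= mulr0 mul0r mulr0 addr0.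
  done.
have [wp hwp0 hwp] := orth_exists psi w hN hp hw.
split.
- exact: hmkt.
- move=> x hx; rewrite invdiag // bilE; exact: horth.
- rewrite /Ups_market; split => hD; split.
  + split; last by exists w.
    move=> x hx; have [g /andP[hg0 hg1] ->] := hG x hx.
    rewrite lerD2l mulrC ler_wpM2r //.
  + split; last by exists wp => //; apply: horth.
    move=> x hx; have [g /andP[hg0 hg1] ->] := hG x hx.
    by rewrite lerDl mulr_ge0.
  + split; last by exists wp => //; apply: horth.
    move=> x hx; have [g /andP[hg0 hg1] ->] := hG x hx.
    by rewrite gerDl mulr_le0_ge0.
  + split; last by exists w.
    move=> x hx; have [g /andP[hg0 hg1] ->] := hG x hx.
    rewrite lerD2l mulrC; exact: ler_wnM2l.
- exact: part4.
- move=> hlt; exact: part5.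
Qed.
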